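(* Let $K$ be a field, $S=K[x_1,\dots,x_n]$, $A\subseteq\{1,\dots,n\}$ and $f=\prod_{j\in A}x_j$. In any Stanley decomposition of $S_f$, the number of Stanley spaces of maximal dimension (among the spaces of that decomposition) is equal to $2^{|A|}$.
   Context: $S_f=K[x_1,\dots,x_n,x_j^{-1}:j\in A]$ with $K$-basis the monomials $x_1^{a_1}\cdots x_n^{a_n}$, $a_j\in\mathbb Z$ for $j\in A$, $a_j\in\mathbb N$ otherwise. A Stanley space of $S_f$ is $uK[Z]$, the $K$-span of the monomials $uw$ ($w$ a monomial in the elements of $Z$), where $u$ is a monomial, $Z\subseteq\{x_1,\dots,x_n\}\cup\{x_j^{-1}:j\in A\}$ with $\{x_j,x_j^{-1}\}\not\subseteq Z$ for all $j\in A$, and $uK[Z]$ is a free $K[Z]$-module; its dimension is $|Z|$. A Stanley decomposition of $S_f$ is an expression of $S_f$ as a finite direct sum (of $K$-vector spaces) of Stanley spaces. *)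

(* Defs.v *)
From HB Require Import structures.
From mathcomp Require Import all_boot all_order all_algebra.
Set Implicit Arguments. Unset Strict Implicit. Unset Printing Implicit Defensive.
Import Order.TTheory GRing.Theory Num.Theory.
Local Open Scope ring_scope.

(* Monomials of K[x_1..x_n, x_1^-1..x_n^-1] are identified with their
   exponent vectors a : 'I_n -> int  (x^a = x_1^{a_1} ... x_n^{a_n}). *)
Definition mon (n : nat) := {ffun 'I_n -> int}.

(* a is the exponent vector of a monomial of S_f, f = prod_{j in A} x_j:
   a_j in Z for j in A, a_j in N otherwise. *)
Definition in_Sf (n : nat) (A : {set 'I_n}) (a : mon n) : Prop :=
  forall i : 'I_n, i \notin A -> 0 <= a i.

(* Elements of the Laurent polynomial ring K[x^{+-1}] are finitely supported
   coefficient functions p : mon n -> K (p = sum_a p(a) x^a). *)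
Definition fin_supp (K : fieldType) (n : nat) (p : mon n -> K) : Prop :=
  exists s : seq (mon n), forall a, a \notin s -> p a = 0.

Definition kspan (K : fieldType) (n : nat) (P : mon n -> Prop) (p : mon n -> K)
  : Prop := fin_supp p /\ forall a, ~ P a -> p a = 0.

Definition in_Sf_elt (K : fieldType) (n : nat) (A : {set 'I_n}) (p : mon n -> K)
  : Prop := kspan (@in_Sf n A) p.

(* Data of a Stanley space u K[Z]: u a monomial, Z = {x_i : i in Zp} u
   {x_j^{-1} : j in Zn}. *)
Record stanley_data (n : nat) := StanleyData {
  st_u : mon n;
  st_Zp : {set 'I_n};
  st_Zn : {set 'I_n} }.

(* Well-formedness: u is a monomial of S_f, the x_j^{-1} in Z have j in A,
   and {x_j, x_j^{-1}} is never contained in Z.  (Freeness of u K[Z] over K[Z]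
   is automatic under these conditions.) *)
Definition is_stanley_space (n : nat) (A : {set 'I_n}) (D : stanley_data n)
  : Prop :=
  [/\ in_Sf A (st_u D), st_Zn D \subset A & [disjoint st_Zp D & st_Zn D]].

(* a is the exponent of a monomial u*w with w a monomial in the elements of Z. *)
Definition in_stanley (n : nat) (D : stanley_data n) (a : mon n) : Prop :=
  forall i : 'I_n,
    if i \in st_Zp D then st_u D i <= a i
    else if i \in st_Zn D then a i <= st_u D i
    else a i == st_u D i.

Definition in_stanley_space (K : fieldType) (n : nat) (D : stanley_data n)
  (p : mon n -> K) : Prop := kspan (in_stanley D) p.

Definition sdim (n : nat) (D : stanley_data n) : nat :=
  #|st_Zp D| + #|st_Zn D|.

(* S_f is the (internal) direct sum of the K-subspaces given by D i, i < m:
   each space lies in S_f, and every element of S_f is uniquely a sum of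
   elements of the spaces. *)
Definition stanley_decomposition (K : fieldType) (n : nat) (A : {set 'I_n})
  (m : nat) (D : 'I_m -> stanley_data n) : Prop :=
  (forall i (p : mon n -> K), in_stanley_space (D i) p -> in_Sf_elt A p) /\
  (forall p : mon n -> K, in_Sf_elt A p ->
     exists q : 'I_m -> mon n -> K,
       (forall i, @in_stanley_space K n (D i) (q i)) /\
       (forall a, p a = \sum_(i < m) q i a)) /\
  (forall q q' : 'I_m -> mon n -> K,
     (forall i, @in_stanley_space K n (D i) (q i)) ->
     (forall i, @in_stanley_space K n (D i) (q' i)) ->
     (forall a, \sum_(i < m) q i a = \sum_(i < m) q' i a) ->
     forall i a, q i a = q' i a).

(* Main.v *)
Require Import Defs.
From HB Require Import structures.
From mathcomp Require Import all_boot all_order all_algebra.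
From mathcomp Require Import zify.
From Stdlib Require Import Classical.
Set Implicit Arguments. Unset Strict Implicit. Unset Printing Implicit Defensive.
Import Order.TTheory GRing.Theory Num.Theory.
Local Open Scope ring_scope.

Definition ind (K : fieldType) (n : nat) (a : mon n) : mon n -> K :=
  fun b => if b == a then 1%R else 0%R.

Lemma cover (K : fieldType) (n : nat) (A : {set 'I_n}) (m : nat)
  (D : 'I_m -> stanley_data n) (hdec : stanley_decomposition K A D) a :
  in_Sf A a -> exists i, in_stanley (D i) a.
Proof.
move=> ha; case: hdec => _ [hex _].
have [|q [hq hs]] := hex (@ind K n a).
  split; first by exists [:: a] => b; rewrite inE /ind => /negbTE ->.
  by move=> b hb; rewrite /ind; case: eqP => // e; subst b.
have : (\sum_(i < m) q i a <> 0)%R by rewrite -hs /ind eqxx; apply/eqP; exact: oner_neq0.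
move=> hne; apply: NNPP => hn; apply: hne; apply: big1 => i _.
case: (hq i) => _ h; apply: h => hi; apply: hn; by exists i.
Qed.

Lemma uniqc (K : fieldType) (n : nat) (A : {set 'I_n}) (m : nat)
  (D : 'I_m -> stanley_data n) (hdec : stanley_decomposition K A D) a i j :
  in_stanley (D i) a -> in_stanley (D j) a -> i = j.
Proof.
move=> hi hj; case: hdec => _ [_ huq].
apply: NNPP => hij.
pose q := fun k : 'I_m => if k == i then @ind K n a else (fun _ => 0%R).
pose q' := fun k : 'I_m => if k == j then @ind K n a else (fun _ => 0%R).
have sp : forall (P : mon n -> Prop), P a -> kspan P (@ind K n a).
  move=> P Pa; split; first by exists [:: a] => b; rewrite inE /ind => /negbTE ->.
  by move=> b hb; rewrite /ind; case: eqP => // e; subst b.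
have z0 : forall (P : mon n -> Prop), kspan P (fun _ => 0%R : K).
  by move=> P; split; [exists [::] | ].
have := huq q q'.
have H1 : forall i0, in_stanley_space (D i0) (q i0).
  by move=> k; rewrite /in_stanley_space /q; case: (eqVneq k i) => [->|_]; [exact: sp | exact: z0].
have H2 : forall i0, in_stanley_space (D i0) (q' i0).
  by move=> k; rewrite /in_stanley_space /q'; case: (eqVneq k j) => [->|_]; [exact: sp | exact: z0].
move=> /(_ H1 H2) h.
have : q i a = q' i a.
  apply: h => b.
  rewrite (bigD1 i) //= big1 => [|k /negbTE hk]; last by rewrite /q hk.
  rewrite (bigD1 j) //= big1 => [|k /negbTE hk]; last by rewrite /q' hk.
  by rewrite /q /q' !eqxx !addr0.
rewrite /q /q' eqxx.
have -> : (i == j) = false by apply/eqP.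
by rewrite /ind eqxx => /eqP; rewrite oner_eq0.
Qed.

Section Geo.
Local Open Scope nat_scope.
Variables (n m : nat) (D : 'I_m -> stanley_data n).

Definition TT : nat := (\max_(i < m) \max_(k < n) absz (st_u (D i) k)).+1.

Lemma uT i k : (- (TT%:Z) < st_u (D i) k)%R /\ (st_u (D i) k < TT%:Z)%R.
Proof.
have h : (absz (st_u (D i) k) < TT)%N.
  rewrite ltnS; apply: leq_trans (leq_bigmax i).
  exact: (leq_bigmax (F := fun k => absz (st_u (D i) k)) k).
move: h; set x := st_u (D i) k; lia.
Qed.

Definition pt (N : {set 'I_n}) : mon n :=
  [ffun k => if k \in N then (- (TT%:Z))%R else (TT%:Z)].

Lemma disj_card (P Q : {set 'I_n}) : [disjoint P & Q] ->
  #|P| + #|Q| = #|P :|: Q|.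
Proof.
move=> d; rewrite cardsU.
by move: d; rewrite -setI_eq0 => /eqP ->; rewrite cards0 subn0.
Qed.

Lemma sdim_le A i : is_stanley_space A (D i) -> sdim (D i) <= n.
Proof.
case=> _ _ d; rewrite /sdim disj_card //.
by apply: leq_trans (max_card _) _; rewrite card_ord.
Qed.

Lemma pt_cone A i N : is_stanley_space A (D i) -> in_stanley (D i) (pt N) ->
  sdim (D i) = n /\ st_Zn (D i) = N.
Proof.
case=> _ _ d h; split.
  rewrite /sdim disj_card //; transitivity #|[set: 'I_n]|; last by rewrite cardsT card_ord.
  apply: eq_card => k; rewrite !inE; have := h k; have [u1 u2] := uT i k.
  rewrite /pt ffunE.
  case: (k \in st_Zp (D i)) => //; case: (k \in st_Zn (D i)) => //.
  case: (k \in N) => /eqP; lia.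
apply/setP => k; have := h k; have [u1 u2] := uT i k.
rewrite /pt ffunE.
have dk : ~~ ((k \in st_Zp (D i)) && (k \in st_Zn (D i))).
  by case hk: (k \in st_Zp (D i)) => //=; rewrite (disjointFr d hk).
move: dk.
case: (k \in st_Zp (D i)); case: (k \in st_Zn (D i)); case: (k \in N) => //=; try lia.
Qed.

Lemma full_cone A i : is_stanley_space A (D i) -> sdim (D i) = n ->
  in_stanley (D i) (pt (st_Zn (D i))).
Proof.
case=> _ _ d hs k; have [u1 u2] := uT i k.
have hU : st_Zp (D i) :|: st_Zn (D i) = setT.
  apply/eqP; rewrite eqEcard subsetT /= cardsT card_ord -disj_card //.
  by move: hs; rewrite /sdim => ->.
have dk : ~~ ((k \in st_Zp (D i)) && (k \in st_Zn (D i))).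
  by case hk: (k \in st_Zp (D i)) => //=; rewrite (disjointFr d hk).
have : k \in st_Zp (D i) :|: st_Zn (D i) by rewrite hU inE.
rewrite inE /pt ffunE; move: dk.
case: (k \in st_Zp (D i)); case: (k \in st_Zn (D i)) => //=; lia.
Qed.

End Geo.

Local Close Scope ring_scope.
Theorem corollary6p6 (K : fieldType) (n : nat) (A : {set 'I_n}) (m : nat)
  (D : 'I_m -> stanley_data n)
  (hD : forall i, is_stanley_space A (D i))
  (hdec : stanley_decomposition K A D) :
  #|[set i : 'I_m | sdim (D i) == \max_(k < m) sdim (D k)]| = 2 ^ #|A|.
Proof.
have ptS (N : {set 'I_n}) : N \subset A -> in_Sf A (pt D N).
  move=> sN k kA; rewrite /pt ffunE.
  have -> : (k \in N) = false by apply/negbTE; apply: contra kA; apply: (subsetP sN).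
  by [].
have [i0 hi0] := cover hdec (ptS _ (sub0set A)).
have [hs0 _] := pt_cone (hD i0) hi0.
have hmax : (\max_(k < m) sdim (D k))%N = n.
  apply/eqP; rewrite eqn_leq; apply/andP; split.
    by apply/bigmax_leqP => i _; exact: sdim_le (hD i).
  by apply: (leq_trans _ (leq_bigmax (F:=fun k => sdim (D k)) i0)); rewrite hs0.
rewrite hmax -card_powerset.
set S := [set i : 'I_m | sdim (D i) == n].
rewrite -(@card_in_imset _ _ (fun i => st_Zn (D i)) S).
  apply: eq_card => N; rewrite powersetE; apply/imsetP/idP.
    by case=> i _ ->; case: (hD i).
  move=> sN; have [i hi] := cover hdec (ptS _ sN).
  have [h1 h2] := pt_cone (hD i) hi.
  by exists i => //; rewrite inE h1.
move=> i j; rewrite !inE => /eqP hi /eqP hj e.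
have := full_cone (hD i) hi; have := full_cone (hD j) hj; rewrite /= e => h1 h2.

exact (uniqc hdec h2 h1).
Qed.
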